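(* Let $\mathfrak d=\mathfrak n^-\oplus\mathfrak k\oplus\mathfrak h\oplus\mathfrak n^+$ be the Lie algebra described in the context. Define a bilinear form $(\cdot|\cdot)_{\mathfrak d}$ on $\mathfrak d$ by: for $h,h',h_\lambda\in\mathfrak h$, $x,x'\in\mathfrak n^+\oplus\mathfrak n^-$, $k,k',k_\mu\in\mathfrak k$, $(h|h')_{\mathfrak d}=2(h|h')$, $(h|x)_{\mathfrak d}=(x|h)_{\mathfrak d}=0$, $(x|x')_{\mathfrak d}=(x|x')$, $(h_\lambda|k_\mu)_{\mathfrak d}=-2u(\lambda,\mu)$, $(k_\mu|h_\lambda)_{\mathfrak d}=2u(\mu,\lambda)$, $(k|x)_{\mathfrak d}=(x|k)_{\mathfrak d}=0$, $(k|k')_{\mathfrak d}=2(\varphi^{-1}(k)|\varphi^{-1}(k'))$, where $(\cdot|\cdot)$ is the invariant form on $\mathfrak g$. Then $(\cdot|\cdot)_{\mathfrak d}$ is a symmetric bilinear form on $\mathfrak d$ which is $\mathfrak d$-invariant, i.e. $([a,b]|c)_{\mathfrak d}=(a|[b,c])_{\mathfrak d}$ for all $a,b,c\in\mathfrak d$.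
   Context: Let $C=(a_{ij})_{n\times n}$ be an indecomposable symmetrizable generalized Cartan matrix of finite type, and $D=\mathrm{diag}(d_1,\dots,d_n)$ with positive integers $d_i$ such that $DC$ is symmetric positive definite. Let $\mathfrak g$ be the finite dimensional simple complex Lie algebra (bracket $[\cdot,\cdot]_{\mathfrak g}$) associated to $C$, $\mathfrak h$ a Cartan subalgebra with simple roots $\alpha_1,\dots,\alpha_n$, and $h_i\in\mathfrak h$ with $\alpha_j(h_i)=a_{ij}$; $\mathfrak g$ is generated by $h_i,x_{\pm\alpha_i}$ with $[h_i,x_{\pm\alpha_j}]_{\mathfrak g}=\pm a_{ij}x_{\pm\alpha_j}$, $[x_{\alpha_i},x_{-\alpha_j}]_{\mathfrak g}=\delta_{ij}h_i$ and the Serre relations. Let $\mathfrak n^+$ (resp. $\mathfrak n^-$) be the span of root vectors with positive (resp. negative) roots, $\mathfrak n=\mathfrak n^-\oplus\mathfrak n^+$; $x_\alpha$ always denotes a root vector of root $\alpha$. Let $(\cdot|\cdot)$ be the symmetric bilinear form on $\mathfrak h^*$ with $(\alpha_i|\alpha_j)=d_ia_{ij}$; for $\lambda\in\mathfrak h^*$ let $h_\lambda\in\mathfrak h$ be defined by $\alpha_i(h_\lambda)=(\alpha_i|\lambda)$ for all $i$. This gives a form on $\mathfrak h$, $(h_\lambda|h_\mu)=(\lambda|\mu)=\lambda(h_\mu)$, extended to the nondegenerate $\mathfrak g$-invariant symmetric form $(\cdot|\cdot)$ on $\mathfrak g$ with $(h_i|h_j)=d_j^{-1}a_{ij}$, $(h|x_\alpha)=0$,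 $(x_\alpha|x_\beta)=0$ if $\alpha+\beta\neq0$, $(x_{\alpha_i}|x_{-\alpha_j})=d_i^{-1}\delta_{ij}$. Let $u=(u_{ij})$ be a skew symmetric complex $n\times n$ matrix, giving $u(\lambda,\mu)=\sum_{i,j}u_{ij}\lambda(h_i)\mu(h_j)$ on $\mathfrak h^*$; let $\Phi:\mathfrak h^*\to\mathfrak h^*$ be the linear map with $u(\lambda,\mu)=(\Phi\lambda|\mu)$, and $\Phi_\pm=\Phi\pm I$. Let $\mathfrak k$ be a vector space with a linear isomorphism $\varphi:\mathfrak h\to\mathfrak k$, and $k_\lambda=\varphi(h_\lambda)$. Let $\mathfrak g'=\mathfrak n^-\oplus\mathfrak k\oplus\mathfrak n^+$ be the Lie algebra (isomorphic to $\mathfrak g$) with bracket $[k_\lambda,k_\mu]_{\mathfrak g'}=0$, $[k_\lambda,x_\alpha]_{\mathfrak g'}=(\alpha|\lambda)x_\alpha$, $[x_\alpha,x_\beta]_{\mathfrak g'}=[x_\alpha,x_\beta]_{\mathfrak g}$ for $\alpha\neq-\beta$, $[x_\alpha,x_{-\alpha}]_{\mathfrak g'}=\varphi([x_\alpha,x_{-\alpha}]_{\mathfrak g})$. Then $\mathfrak d=\mathfrak n^-\oplus\mathfrak k\oplus\mathfrak h\oplus\mathfrak n^+$ is the Lie algebra with bracket: $[h_\lambda,h_\mu]=[h_\lambda,k_\mu]=[k_\lambda,k_\mu]=0$, $[h_\lambda,x_\alpha]=-(\Phi_-\lambda|\alpha)x_\alpha$, $[k_\lambda,x_\alpha]=(\Phi_+\lambda|\alpha)x_\alpha$,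 $[x_\alpha,x_\beta]=\tfrac12([x_\alpha,x_\beta]_{\mathfrak g}+[x_\alpha,x_\beta]_{\mathfrak g'})$ for all $\lambda,\mu\in\mathfrak h^*$ and root vectors $x_\alpha,x_\beta\in\mathfrak n$. *)

(* Defs.v *)
From HB Require Import structures.
From mathcomp Require Import all_boot all_order all_algebra.
Set Implicit Arguments. Unset Strict Implicit. Unset Printing Implicit Defensive.
Import Order.TTheory GRing.Theory Num.Theory.
Local Open Scope ring_scope.

Section Defs.
Variable n : nat.

Definition gcm (C : 'M[int]_n) : Prop :=
  (forall i, C i i = 2) /\ (forall i j, i != j -> C i j <= 0) /\
  (forall i j, C i j = 0 -> C j i = 0).

Definition indecomposable (C : 'M[int]_n) : Prop :=
  forall I : {set 'I_n},
    (forall i j, i \in I -> j \notin I -> C i j = 0) -> I = set0 \/ I = setT.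

(** D = diag(d_1..d_n), d_i positive integers, DC symmetric positive definite *)
Definition sym_posdef_symmetrizer (C : 'M[int]_n) (d : 'I_n -> nat) : Prop :=
  (forall i, (0 < d i)%N) /\
  (forall i j, (d i)%:Z * C i j = (d j)%:Z * C j i) /\
  (forall v : 'I_n -> rat, (exists i, v i != 0) ->
     0 < \sum_i \sum_j v i * ((d i)%:Z * C i j)%:~R * v j).

Variable F : numClosedFieldType.

Definition bilinear_map (U V W : lmodType F) (b : U -> V -> W) : Prop :=
  (forall r x x' y, b (r *: x + x') y = r *: b x y + b x' y) /\
  (forall r x y y', b x (r *: y + y') = r *: b x y + b x y').

Definition bilinear_form (V : lmodType F) (b : V -> V -> F) : Prop :=
  (forall r x x' y, b (r *: x + x') y = r * b x y + b x' y) /\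
  (forall r x y y', b x (r *: y + y') = r * b x y + b x y').

Definition lie_bracket (G : lmodType F) (bg : G -> G -> G) : Prop :=
  bilinear_map bg /\ (forall x, bg x x = 0) /\
  (forall x y z, bg x (bg y z) + bg y (bg z x) + bg z (bg x y) = 0).

Variable G : lmodType F.
Variable C : 'M[int]_n.
Variable bg : G -> G -> G.
Variables hh e f : 'I_n -> G.   (* h_i, x_{alpha_i}, x_{-alpha_i} *)

Definition chevalley_serre : Prop :=
  (forall i j, bg (hh i) (hh j) = 0) /\
  (forall i j, bg (hh i) (e j) = (C i j)%:~R *: e j) /\
  (forall i j, bg (hh i) (f j) = - ((C i j)%:~R *: f j)) /\
  (forall i j, bg (e i) (f j) = if i == j then hh i else 0) /\
  (forall i j, i != j -> iter (absz (1 - C i j)) (bg (e i)) (e j) = 0) /\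
  (forall i j, i != j -> iter (absz (1 - C i j)) (bg (f i)) (f j) = 0).

Definition lie_generated : Prop :=
  forall P : G -> Prop,
    P 0 -> (forall x y, P x -> P y -> P (x + y)) ->
    (forall r x, P x -> P (r *: x)) ->
    (forall x y, P x -> P y -> P (bg x y)) ->
    (forall i, P (hh i) /\ P (e i) /\ P (f i)) ->
    forall x, P x.

Definition lin_indep (v : 'I_n -> G) : Prop :=
  forall c : 'I_n -> F, \sum_i c i *: v i = 0 -> forall i, c i = 0.

Definition in_h (h : G) : Prop := exists c : 'I_n -> F, h = \sum_i c i *: hh i.

(** x is a root vector of the root alpha (alpha only matters on h) *)
Definition root_vector (x : G) (alpha : G -> F) : Prop :=
  x != 0 /\ (exists h, in_h h /\ alpha h != 0) /\
  (forall h, in_h h -> bg h x = alpha h *: x).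

(** n = n^- (+) n^+ = span of the root vectors *)
Definition in_n (x : G) : Prop :=
  exists s : seq G, (forall y, y \in s -> exists alpha, root_vector y alpha) /\
                    x = \sum_(y <- s) y.

Variable d : 'I_n -> nat.
Variable fg : G -> G -> F.

Definition g_invariant_form : Prop :=
  bilinear_form fg /\ (forall x y, fg x y = fg y x) /\
  (forall x y z, fg (bg x y) z = fg x (bg y z)) /\
  (forall i j, fg (hh i) (hh j) = (C i j)%:~R / (d j)%:R) /\
  (forall i j, fg (e i) (f j) = if i == j then ((d i)%:R)^-1 else 0).

Variable u : 'M[F]_n.

Definition skew_symmetric (M : 'M[F]_n) : Prop := forall i j, M i j = - M j i.

(** u(lambda, mu) for h = h_lambda, h' = h_mu  (lambda(h_i) = (h_lambda|h_i)) *)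
Definition uform (h h' : G) : F :=
  \sum_i \sum_j u i j * fg h (hh i) * fg h' (hh j).

(** u(lambda, alpha) for h = h_lambda and alpha a root *)
Definition uroot (h : G) (alpha : G -> F) : F :=
  \sum_i \sum_j u i j * fg h (hh i) * alpha (hh j).

Variable K : lmodType F.
Variable phi : G -> K.
Variable phiinv : K -> G.

Definition phi_iso : Prop :=
  (forall r x y, in_h x -> in_h y -> phi (r *: x + y) = r *: phi x + phi y) /\
  (forall k, in_h (phiinv k) /\ phi (phiinv k) = k) /\
  (forall h, in_h h -> phiinv (phi h) = h).

(** d = n (+) k (+) h, elements (x, k, h) *)
Definition dT := (G * K * G)%type.
Definition Nd (x : G) : dT := (x, 0, 0).
Definition Kd (k : K) : dT := (0, k, 0).
Definition Hd (h : G) : dT := (0, 0, h).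
Definition in_d (a : dT) : Prop := in_n a.1.1 /\ in_h a.2.

Definition d_bracket (bd : dT -> dT -> dT) : Prop :=
  (forall r a a' b, in_d a -> in_d a' -> in_d b ->
     bd (r *: a + a') b = r *: bd a b + bd a' b) /\
  (forall r a b b', in_d a -> in_d b -> in_d b' ->
     bd a (r *: b + b') = r *: bd a b + bd a b') /\
  (forall a b, in_d a -> in_d b -> bd a b = - bd b a) /\
  (forall h h', in_h h -> in_h h' ->
     [/\ bd (Hd h) (Hd h') = 0, bd (Hd h) (Kd (phi h')) = 0
       & bd (Kd (phi h)) (Kd (phi h')) = 0]) /\
  (* [h_lambda, x_alpha] = -(Phi_- lambda | alpha) x_alpha *)
  (forall h x alpha, in_h h -> root_vector x alpha ->
     bd (Hd h) (Nd x) = Nd ((alpha h - uroot h alpha) *: x)) /\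
  (* [k_lambda, x_alpha] = (Phi_+ lambda | alpha) x_alpha *)
  (forall h x alpha, in_h h -> root_vector x alpha ->
     bd (Kd (phi h)) (Nd x) = Nd ((uroot h alpha + alpha h) *: x)) /\
  (forall x alpha y beta, root_vector x alpha -> root_vector y beta ->
     (exists h, in_h h /\ alpha h + beta h != 0) ->
     bd (Nd x) (Nd y) = Nd (bg x y)) /\
  (forall x alpha y beta, root_vector x alpha -> root_vector y beta ->
     (forall h, in_h h -> alpha h + beta h = 0) ->
     bd (Nd x) (Nd y) = (0, 2^-1 *: phi (bg x y), 2^-1 *: bg x y)).

Definition d_form (a b : dT) : F :=
  2 * fg a.2 b.2 + fg a.1.1 b.1.1
  - 2 * uform a.2 (phiinv b.1.2) + 2 * uform (phiinv a.1.2) b.2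
  + 2 * fg (phiinv a.1.2) (phiinv b.1.2).

End Defs.

(* Main.v *)
Require Import Defs.
From HB Require Import structures.
From mathcomp Require Import all_boot all_order all_algebra.
From mathcomp Require Import ring.
From Stdlib Require Import Classical_Prop.
Set Implicit Arguments. Unset Strict Implicit. Unset Printing Implicit Defensive.
Import Order.TTheory GRing.Theory Num.Theory.
Local Open Scope ring_scope.

Lemma selfadd0 (V : zmodType) (a : V) : a = a + a -> a = 0.
Proof. by move/(congr1 (fun t => t - a)); rewrite subrr addrK. Qed.

Section Bracket.
Variables (F : numClosedFieldType) (G : lmodType F) (bg : G -> G -> G).
Hypothesis Hlie : lie_bracket bg.
Let bil1 : forall r x x' y, bg (r *: x + x') y = r *: bg x y + bg x' y.
Proof. by move: Hlie; rewrite /lie_bracket /bilinear_map => -[[]]. Qed.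
Let bil2 : forall r x y y', bg x (r *: y + y') = r *: bg x y + bg x y'.
Proof. by move: Hlie; rewrite /lie_bracket /bilinear_map => -[[]]. Qed.
Let lie0 : forall x, bg x x = 0.
Proof. by move: Hlie; rewrite /lie_bracket /bilinear_map => -[_ []]. Qed.
Let jac : forall x y z, bg x (bg y z) + bg y (bg z x) + bg z (bg x y) = 0.
Proof. by move: Hlie; rewrite /lie_bracket /bilinear_map => -[_ []]. Qed.

Lemma bgDl x y z : bg (x + y) z = bg x z + bg y z.
Proof. by rewrite -[x]scale1r bil1 !scale1r. Qed.
Lemma bgDr x y z : bg z (x + y) = bg z x + bg z y.
Proof. by rewrite -[x]scale1r bil2 !scale1r. Qed.
Lemma bg0l z : bg 0 z = 0.
Proof. by apply: selfadd0; rewrite -bgDl addr0. Qed.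
Lemma bg0r z : bg z 0 = 0.
Proof. by apply: selfadd0; rewrite -bgDr addr0. Qed.
Lemma bgZl r x z : bg (r *: x) z = r *: bg x z.
Proof. by rewrite -[r *: x]addr0 bil1 bg0l addr0. Qed.
Lemma bgZr r x z : bg z (r *: x) = r *: bg z x.
Proof. by rewrite -[r *: x]addr0 bil2 bg0r addr0. Qed.
Lemma bgNl x z : bg (- x) z = - bg x z.
Proof. by rewrite -scaleN1r bgZl scaleN1r. Qed.
Lemma bgNr x z : bg z (- x) = - bg z x.
Proof. by rewrite -scaleN1r bgZr scaleN1r. Qed.
Lemma bg_anti x y : bg x y = - bg y x.
Proof.
have := lie0 (x + y).
rewrite bgDl !bgDr !lie0 add0r addr0 => /eqP; rewrite addr_eq0 => /eqP ->.
done.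
Qed.
Lemma bg_der a b c : bg a (bg b c) = bg (bg a b) c + bg b (bg a c).
Proof.
have := jac a b c.
move/eqP; rewrite -addrA addr_eq0 => /eqP ->.
rewrite opprD [bg c (bg a b)]bg_anti [bg c a]bg_anti bgNr !opprK addrC.
done.
Qed.
Lemma bg_sumr I (r : seq I) (P : pred I) (Fn : I -> G) x :
  bg x (\sum_(i <- r | P i) Fn i) = \sum_(i <- r | P i) bg x (Fn i).
Proof.
elim/big_rec2: _ => [|i y1 y2 _ IH]; first by rewrite bg0r.
by rewrite -IH bgDr.
Qed.
Lemma bg_suml I (r : seq I) (P : pred I) (Fn : I -> G) x :
  bg (\sum_(i <- r | P i) Fn i) x = \sum_(i <- r | P i) bg (Fn i) x.
Proof.
elim/big_rec2: _ => [|i y1 y2 _ IH]; first by rewrite bg0l.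
by rewrite -IH bgDl.
Qed.
End Bracket.

Section Span.
Variables (F : numClosedFieldType) (G : lmodType F).
Inductive spanP (P : G -> Prop) : G -> Prop :=
| sp0 : spanP P 0
| spS r y x : P y -> spanP P x -> spanP P (r *: y + x).

Lemma spanP_atom P y : P y -> spanP P y.
Proof. by move=> Py; rewrite -[y]scale1r -[_ *: y]addr0; apply: spS => //; apply: sp0. Qed.
Lemma spanP_add P x y : spanP P x -> spanP P y -> spanP P (x + y).
Proof.
elim=> [|r z x' Pz _ IH] Hy; first by rewrite add0r.
by rewrite -addrA; apply: spS => //; apply: IH.
Qed.
Lemma spanP_scale P r x : spanP P x -> spanP P (r *: x).
Proof.
elim=> [|r' z x' Pz _ IH]; first by rewrite scaler0; apply: sp0.
by rewrite scalerDr scalerA; apply: spS.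
Qed.
Lemma spanP_comb P r x y : spanP P x -> spanP P y -> spanP P (r *: x + y).
Proof. by move=> Hx Hy; apply: spanP_add => //; apply: spanP_scale. Qed.
Lemma spanP_mono P Q x : (forall y, P y -> spanP Q y) -> spanP P x -> spanP Q x.
Proof.
move=> PQ; elim=> [|r y x' Py _ IH]; first exact: sp0.
by apply: spanP_comb => //; apply: PQ.
Qed.
Lemma spanP_lin P Q (g : G -> G) x :
  g 0 = 0 -> (forall r a b, g (r *: a + b) = r *: g a + g b) ->
  (forall y, P y -> spanP Q (g y)) -> spanP P x -> spanP Q (g x).
Proof.
move=> g0 gl PQ; elim=> [|r y x' Py _ IH]; first by rewrite g0; exact: sp0.
by rewrite gl; apply: spanP_comb => //; apply: PQ.
Qed.
End Span.

Section Chains.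
Variables (n : nat) (F : numClosedFieldType) (G : lmodType F) (bg : G -> G -> G).
Hypothesis Hlie : lie_bracket bg.

Inductive chain (E : 'I_n -> G) : G -> Prop :=
| ch1 i : chain E (E i)
| chS i x : chain E x -> chain E (bg (E i) x).

Lemma chain_weight (H E : 'I_n -> G) (c : 'I_n -> 'I_n -> F) y :
  (forall i j, bg (H i) (E j) = c i j *: E j) -> chain E y ->
  exists m : 'I_n -> nat, (exists j, m j != 0%N) /\
    forall i, bg (H i) y = (\sum_j c i j * (m j)%:R) *: y.
Proof.
move=> hHE; elim=> [j|j x _ [m [[j0 mj0] IH]]].
  exists (fun k => (k == j)%N); split; first by exists j; rewrite eqxx.
  move=> i; rewrite hHE (bigD1 j) //= eqxx mulr1 big1 ?addr0 // => k /negbTE ->.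
  by rewrite mulr0.
exists (fun k => m k + (k == j))%N; split.
  by exists j0; move: mj0; case: (m j0).
move=> i; rewrite bg_der // hHE IH bgZl // bgZr // -scalerDl.
congr (_ *: _); rewrite addrC.
rewrite [RHS](eq_bigr (fun k => c i k * (m k)%:R + c i k * (k == j)%:R)); last first.
  by move=> k _; rewrite natrD mulrDr.
rewrite big_split /=; congr (_ + _).
rewrite (bigD1 j) //= eqxx mulr1 big1 ?addr0 // => k /negbTE ->.
by rewrite mulr0.
Qed.

Lemma chain_eig (H E : 'I_n -> G) (c : 'I_n -> 'I_n -> F) y i :
  (forall i j, bg (H i) (E j) = c i j *: E j) -> chain E y ->
  exists s, bg (H i) y = s *: y.
Proof.
by move=> hHE /(chain_weight hHE) [m [_ W]]; eexists; apply: W.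
Qed.

Section Gen2.
Variables (H E Fv : 'I_n -> G) (cE cF : 'I_n -> 'I_n -> F).
Hypotheses (hHE : forall i j, bg (H i) (E j) = cE i j *: E j)
           (hHF : forall i j, bg (H i) (Fv j) = cF i j *: Fv j)
           (hEF : forall i j, bg (E i) (Fv j) = if i == j then H i else 0).
Definition QHF y := (exists k, y = H k) \/ chain Fv y.

Lemma span_QHF_Fv j x : spanP QHF x -> spanP QHF (bg (Fv j) x).
Proof.
apply: spanP_lin; first exact: bg0r.
  by move=> r a b; rewrite bgDr // bgZr.
move=> y [[k ->]|Cy].
  rewrite bg_anti // hHF -scaleNr; apply: spanP_scale; apply: spanP_atom.
  by right; apply: ch1.
by apply: spanP_atom; right; apply: chS.
Qed.

Lemma gen2 i y : chain Fv y -> spanP QHF (bg (E i) y).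
Proof.
elim=> [j|j x Cx IH].
  rewrite hEF; case: (i == j); first by apply: spanP_atom; left; exists i.
  exact: sp0.
rewrite bg_der // hEF; apply: spanP_add; last exact: span_QHF_Fv.
case: (i == j); last by rewrite bg0l //; apply: sp0.
have [s ->] := chain_eig i hHF Cx.
by apply: spanP_scale; apply: spanP_atom; right.
Qed.
End Gen2.
End Chains.

Section Struct.
Variables (n : nat) (F : numClosedFieldType) (G : lmodType F) (bg : G -> G -> G).
Variables (C : 'M[int]_n) (hh e f : 'I_n -> G) (d : 'I_n -> nat).
Hypotheses (Hlie : lie_bracket bg) (Hcs : chevalley_serre C bg hh e f)
  (Hgen : lie_generated bg hh e f) (Hsym : sym_posdef_symmetrizer C d).

Let hHH : forall i j, bg (hh i) (hh j) = 0.
Proof. by move: Hcs => -[]. Qed.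
Let hHe : forall i j, bg (hh i) (e j) = (C i j)%:~R *: e j.
Proof. by move: Hcs => -[_ []]. Qed.
Let hHf : forall i j, bg (hh i) (f j) = - ((C i j)%:~R *: f j).
Proof. by move: Hcs => -[_ [_ []]]. Qed.
Let hef : forall i j, bg (e i) (f j) = if i == j then hh i else 0.
Proof. by move: Hcs => -[_ [_ [_ []]]]. Qed.
Let hHf' : forall i j, bg (hh i) (f j) = (- (C i j)%:~R) *: f j.
Proof. by move=> i j; rewrite hHf scaleNr. Qed.

Definition mono y := (exists i, y = hh i) \/ chain bg e y \/ chain bg f y.

Lemma L_h i y : mono y -> spanP mono (bg (hh i) y).
Proof.
case=> [[j ->]|[Cy|Cy]]; first by rewrite hHH; apply: sp0.
  have [s ->] := chain_eig Hlie i hHe Cy.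
  by apply: spanP_scale; apply: spanP_atom; right; left.
have [s ->] := chain_eig Hlie i hHf' Cy.
by apply: spanP_scale; apply: spanP_atom; right; right.
Qed.

Lemma L_e i y : mono y -> spanP mono (bg (e i) y).
Proof.
case=> [[j ->]|[Cy|Cy]].
- rewrite bg_anti // hHe -scaleNr; apply: spanP_scale; apply: spanP_atom.
  by right; left; apply: ch1.
- by apply: spanP_atom; right; left; apply: chS.
- have := gen2 Hlie hHf' hef i Cy; apply: spanP_mono.
  move=> z [[k ->]|Cz]; apply: spanP_atom; first by left; exists k.
  by right; right.
Qed.

Lemma L_f i y : mono y -> spanP mono (bg (f i) y).
Proof.
case=> [[j ->]|[Cy|Cy]].
- rewrite bg_anti // hHf' -scaleNr; apply: spanP_scale; apply: spanP_atom.
  by right; right; apply: ch1.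
- have hHE : forall i j, bg (- hh i) (f j) = (C i j)%:~R *: f j.
    by move=> i' j'; rewrite bgNl // hHf opprK.
  have hHF : forall i j, bg (- hh i) (e j) = (- (C i j)%:~R) *: e j.
    by move=> i' j'; rewrite bgNl // hHe scaleNr.
  have hEF : forall i j, bg (f i) (e j) = if i == j then - hh i else 0.
    move=> i' j'; rewrite bg_anti // hef.
    by case: (eqVneq i' j') => [->|ne]; rewrite ?eqxx ?oppr0.
  have := gen2 Hlie hHF hEF i Cy; apply: spanP_mono.
  move=> z [[k ->]|Cz]; last by apply: spanP_atom; right; left.
  by rewrite -scaleN1r; apply: spanP_scale; apply: spanP_atom; left; exists k.
- by apply: spanP_atom; right; right; apply: chS.
Qed.


Lemma T_all z x : spanP mono x -> spanP mono (bg z x).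
Proof.
move: z x; apply: Hgen.
- by move=> x _; rewrite bg0l //; apply: sp0.
- by move=> x y Px Py w Sw; rewrite bgDl //; apply: spanP_add; [apply: Px | apply: Py].
- by move=> r x Px w Sw; rewrite bgZl //; apply: spanP_scale; apply: Px.
- move=> x y Px Py w Sw.
  have -> : bg (bg x y) w = bg x (bg y w) + (-1) *: bg y (bg x w).
    by rewrite (bg_der Hlie x y w) scaleN1r addrK.
  by apply: spanP_add; [apply: Px; apply: Py | apply: spanP_scale; apply: Py; apply: Px].
- have lin : forall g, (forall r a b, bg g (r *: a + b) = r *: bg g a + bg g b).
    by move=> g r a b; rewrite bgDr // bgZr.
  move=> i; split; [|split]; move=> w; apply: spanP_lin; rewrite ?bg0r //.
  + exact: L_h.
  + exact: L_e.
  + exact: L_f.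
Qed.

Lemma all_span x : spanP mono x.
Proof.
move: x; apply: Hgen.
- exact: sp0.
- exact: spanP_add.
- by move=> r x Px; apply: spanP_scale.
- by move=> x y _ Py; apply: T_all.
- move=> i; split; [|split]; apply: spanP_atom.
  + by left; exists i.
  + by right; left; apply: ch1.
  + by right; right; apply: ch1.
Qed.

Lemma wt_nz_int (m : 'I_n -> nat) : (exists j, m j != 0%N) ->
  exists i, \sum_j C i j * (m j)%:Z != 0.
Proof.
move=> [j0 mj0].
case: (boolP [exists i, \sum_j C i j * (m j)%:Z != 0]).
  by move/existsP.
move/existsPn => H0; exfalso.
have Z : forall i, \sum_j C i j * (m j)%:Z = 0 by move=> i; apply/eqP; move: (H0 i); rewrite negbK.
case: Hsym => _ [_ Hpos].
have Hex : exists i, ((fun j => (m j)%:R) i : rat) != 0 by exists j0; rewrite pnatr_eq0.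
have := Hpos _ Hex.
have -> : \sum_i \sum_j (m i)%:R * ((d i)%:Z * C i j)%:~R * (m j)%:R = 0 :> rat.
  apply: big1 => i _.
  rewrite (eq_bigr (fun j => ((m i)%:R * (d i)%:R) * ((C i j * (m j)%:Z)%:~R) : rat)); last first.
    by move=> j _; rewrite !intrM /= mulrA mulrA -[((m j)%:Z)%:~R]/((m j)%:R : rat) -!mulrA.
  by rewrite -mulr_sumr -rmorph_sum /= Z mulr0.
by rewrite ltxx.
Qed.

Lemma wt_nz (m : 'I_n -> nat) : (exists j, m j != 0%N) ->
  exists i, (\sum_j (C i j)%:~R * (m j)%:R : F) != 0.
Proof.
move/wt_nz_int => [i Hi]; exists i.
have -> : (\sum_j (C i j)%:~R * (m j)%:R : F) = (\sum_j C i j * (m j)%:Z)%:~R.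
  by rewrite rmorph_sum /=; apply: eq_bigr => j _; rewrite intrM.
by rewrite intr_eq0.
Qed.

Lemma in_h0 : in_h hh 0.
Proof. by exists (fun _ => 0); rewrite big1 // => i _; rewrite scale0r. Qed.
Lemma in_h_hh i : in_h hh (hh i).
Proof.
exists (fun k => (k == i)%:R); rewrite (bigD1 i) //= eqxx scale1r big1 ?addr0 //.
by move=> k /negbTE ->; rewrite scale0r.
Qed.
Lemma in_h_comb r x y : in_h hh x -> in_h hh y -> in_h hh (r *: x + y).
Proof.
move=> [c ->] [c' ->]; exists (fun k => r * c k + c' k).
rewrite scaler_sumr -big_split /=; apply: eq_bigr => k _.
by rewrite scalerDl scalerA.
Qed.
Lemma bg_hh_h i h : in_h hh h -> bg (hh i) h = 0.
Proof.
move=> [c ->]; rewrite bg_sumr //; apply: big1 => k _.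
by rewrite bgZr // hHH scaler0.
Qed.

Definition good (p : ('I_n -> F) * G) :=
  (forall i, bg (hh i) p.2 = p.1 i *: p.2) /\ exists i, p.1 i != 0.
Fixpoint allg (s : seq (('I_n -> F) * G)) : Prop :=
  if s is p :: s' then good p /\ allg s' else True.

Lemma good_scale (mu : 'I_n -> F) v r :
  good (mu, v) -> good (mu, r *: v).
Proof.
move=> [E nz]; split => // i /=.
by rewrite bgZr // E !scalerA mulrC.
Qed.

Lemma decomp x : spanP mono x ->
  exists hp s, [/\ in_h hh hp, allg s & x = hp + \sum_(p <- s) p.2].
Proof.
elim=> [|r y x' My _ [hp [s [Hhp Hs ->]]]].
  by exists 0, [::]; rewrite big_nil addr0; split => //; apply: in_h0.
case: My => [[i ->]|[Cy|Cy]].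
- exists (r *: hh i + hp), s; split => //; first by apply: in_h_comb => //; apply: in_h_hh.
  by rewrite addrA.
- have [m [nz W]] := chain_weight Hlie hHe Cy.
  exists hp, (((fun i => \sum_j (C i j)%:~R * (m j)%:R), r *: y) :: s); split => //.
    split => //; apply: good_scale; split => //; exact: wt_nz.
  by rewrite big_cons /= addrCA.
- have [m [nz W]] := chain_weight Hlie hHf' Cy.
  exists hp, (((fun i => \sum_j - (C i j)%:~R * (m j)%:R), r *: y) :: s); split => //.
    split => //; apply: good_scale; split => //=.
    have [i Hi] := wt_nz nz; exists i.
    by rewrite (eq_bigr (fun j => - ((C i j)%:~R * (m j)%:R))) ?sumrN ?oppr_eq0 // => j _; rewrite mulNr.
  by rewrite big_cons /= addrCA.
Qed.

Lemma allg_map (c : ('I_n -> F) * G -> F) s : allg s ->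
  allg [seq (q.1, c q *: q.2) | q <- s].
Proof.
elim: s => //= -[mu' v'] s' IHs [g Hs'] /=; split; last exact: IHs.
exact: good_scale.
Qed.

Lemma sum_eig i s : allg s ->
  \sum_(q <- s) bg (hh i) q.2 = \sum_(q <- s) q.1 i *: q.2.
Proof.
elim: s => [|[mu' v'] s' IHs [[E' _] Hs']]; first by rewrite !big_nil.
by rewrite !big_cons /= E' IHs.
Qed.

Lemma vanish s : allg s -> (forall i, bg (hh i) (\sum_(p <- s) p.2) = 0) ->
  \sum_(p <- s) p.2 = 0.
Proof.
have [N] := ubnP (size s); elim: N s => // N IH [|[mu v] s] /= szs.
  by rewrite big_nil.
move=> [[Ev [i0 nz]] Hs] Z.
set lam := mu i0.
pose s2 := [seq (q.1, (q.1 i0 - lam) *: q.2) | q <- s].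
have Hs2 : allg s2 by apply: allg_map.
have Sum2 : \sum_(q <- s2) q.2 = - lam *: \sum_(q <- (mu, v) :: s) q.2.
  rewrite big_map /=.
  have Z0 := Z i0; rewrite big_cons bgDr // Ev bg_sumr // in Z0.
  rewrite sum_eig // in Z0.
  rewrite (eq_bigr (fun q => q.1 i0 *: q.2 - lam *: q.2)); last by move=> q _; rewrite scalerBl.
  rewrite sumrB -scaler_sumr big_cons /=.
  move/eqP: Z0; rewrite addrC addr_eq0 => /eqP ->.
  by rewrite /= scalerDr !scaleNr.
have := IH s2; rewrite size_map => /(_ szs Hs2).
rewrite Sum2 => H; have {}H : - lam *: \sum_(q <- (mu, v) :: s) q.2 = 0.
  apply: H => i; by rewrite bgZr // Z scaler0.
by move/eqP: H; rewrite scaler_eq0 oppr_eq0 (negbTE nz) => /eqP.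
Qed.

Lemma centr_in_h w : (forall i, bg (hh i) w = 0) -> in_h hh w.
Proof.
move=> Zw; have [hp [s [Hhp Hs E]]] := decomp (all_span w).
suff S0 : \sum_(p <- s) p.2 = 0 by rewrite E S0 addr0.
apply: vanish => // i.
by have := Zw i; rewrite E bgDr // bg_hh_h // add0r.
Qed.

Lemma root_pair_in_h x y alpha beta :
  root_vector bg hh x alpha -> root_vector bg hh y beta ->
  (forall h, in_h hh h -> alpha h + beta h = 0) -> in_h hh (bg x y).
Proof.
move=> [_ [_ Ex]] [_ [_ Ey]] S; apply: centr_in_h => i.
have Hi := in_h_hh i.
rewrite bg_der // (Ex _ Hi) (Ey _ Hi) bgZl // bgZr // -scalerDl.
by rewrite S // scale0r.
Qed.
End Struct.

Section Main.
Variables (n : nat) (F : numClosedFieldType) (G : lmodType F) (bg : G -> G -> G).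
Variables (C : 'M[int]_n) (hh e f : 'I_n -> G) (d : 'I_n -> nat) (fg : G -> G -> F).
Variables (u : 'M[F]_n) (K : lmodType F) (phi : G -> K) (phiinv : K -> G).
Variable (bd : dT G K -> dT G K -> dT G K).
Hypotheses (Hlie : lie_bracket bg) (Hcs : chevalley_serre C bg hh e f)
  (Hgen : lie_generated bg hh e f) (Hsym : sym_posdef_symmetrizer C d)
  (Hinv : g_invariant_form C bg hh e f d fg) (Hskew : skew_symmetric u)
  (Hphi : phi_iso hh phi phiinv) (Hbd : d_bracket bg hh fg u phi bd).

Local Notation inh := (in_h hh).
Local Notation D := (d_form hh fg u phiinv).
Local Notation uf := (uform hh fg u).
Local Notation ur := (uroot hh fg u).
Local Notation rv := (root_vector bg hh).
Local Notation N := (Nd K).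
Local Notation Hd' := (Hd K).
Local Notation Kd' := (Kd G).

Let fgbil1 : forall r x x' y, fg (r *: x + x') y = r * fg x y + fg x' y.
Proof. by move: Hinv => -[[]]. Qed.
Let fgsym : forall x y, fg x y = fg y x.
Proof. by move: Hinv => -[_ []]. Qed.
Let fginv : forall x y z, fg (bg x y) z = fg x (bg y z).
Proof. by move: Hinv => -[_ [_ []]]. Qed.

Lemma fgDl x y z : fg (x + y) z = fg x z + fg y z.
Proof. by rewrite -[x]scale1r fgbil1 mul1r scale1r. Qed.
Lemma fg0l z : fg 0 z = 0.
Proof. by apply: selfadd0; rewrite -fgDl addr0. Qed.
Lemma fgZl r x z : fg (r *: x) z = r * fg x z.
Proof. by rewrite -[r *: x]addr0 fgbil1 fg0l addr0. Qed.
Lemma fg0r z : fg z 0 = 0.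
Proof. by rewrite fgsym fg0l. Qed.
Lemma fgZr r x z : fg z (r *: x) = r * fg z x.
Proof. by rewrite fgsym fgZl fgsym. Qed.
Lemma fgNl x z : fg (- x) z = - fg x z.
Proof. by rewrite -scaleN1r fgZl mulN1r. Qed.
Lemma fgNr x z : fg z (- x) = - fg z x.
Proof. by rewrite -scaleN1r fgZr mulN1r. Qed.
Lemma fgDr x y z : fg z (x + y) = fg z x + fg z y.
Proof. by rewrite fgsym fgDl !(fgsym z). Qed.

Let phlin : forall r x y, inh x -> inh y -> phi (r *: x + y) = r *: phi x + phi y.
Proof. by move: Hphi => -[]. Qed.
Let phinv1 : forall k, inh (phiinv k) /\ phi (phiinv k) = k.
Proof. by move: Hphi => -[_ []]. Qed.
Let phinv2 : forall h, inh h -> phiinv (phi h) = h.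
Proof. by move: Hphi => -[_ []]. Qed.

Lemma phi0 : phi 0 = 0.
Proof.
apply: selfadd0; have := phlin 1 (in_h0 hh) (in_h0 hh).
by rewrite !scale1r addr0; apply.
Qed.
Lemma phiZ r x : inh x -> phi (r *: x) = r *: phi x.
Proof. by move=> hx; rewrite -[r *: x]addr0 phlin ?phi0 ?addr0 //; apply: in_h0. Qed.
Lemma phiinv_lin r k k' : phiinv (r *: k + k') = r *: phiinv k + phiinv k'.
Proof.
have [h1 e1] := phinv1 k; have [h2 e2] := phinv1 k'.
by rewrite -{1}e1 -{1}e2 -phlin // phinv2 //; apply: in_h_comb.
Qed.
Lemma phiinv0 : phiinv 0 = 0.
Proof. by apply: selfadd0; have := phiinv_lin 1 0 0; rewrite !scale1r addr0. Qed.
Lemma phiinvZ r k : phiinv (r *: k) = r *: phiinv k.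
Proof. by rewrite -[r *: k]addr0 phiinv_lin phiinv0 addr0. Qed.

Lemma uf_linl r x y z : uf (r *: x + y) z = r * uf x z + uf y z.
Proof.
rewrite /uform mulr_sumr -big_split /=; apply: eq_bigr => i _.
rewrite mulr_sumr -big_split /=; apply: eq_bigr => j _.
by rewrite fgbil1; ring.
Qed.
Lemma uf_skew x y : uf x y = - uf y x.
Proof.
rewrite /uform exchange_big -sumrN; apply: eq_bigr => i _.
rewrite -sumrN; apply: eq_bigr => j _.
by rewrite (Hskew j i); ring.
Qed.
Lemma uf_linr r x y z : uf z (r *: x + y) = r * uf z x + uf z y.
Proof. by rewrite uf_skew uf_linl (uf_skew x) (uf_skew y); ring. Qed.
Lemma uf0l z : uf 0 z = 0.
Proof. by apply: selfadd0; have := uf_linl 1 0 0 z; rewrite scale1r addr0 mul1r. Qed.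
Lemma uf0r z : uf z 0 = 0.
Proof. by rewrite uf_skew uf0l oppr0. Qed.
Lemma ufZl r x z : uf (r *: x) z = r * uf x z.
Proof. by rewrite -[r *: x]addr0 uf_linl uf0l addr0. Qed.
Lemma ufZr r x z : uf z (r *: x) = r * uf z x.
Proof. by rewrite -[r *: x]addr0 uf_linr uf0r addr0. Qed.

Lemma D_sym a b : D a b = D b a.
Proof.
rewrite /d_form fgsym (fgsym a.1.1) (fgsym (phiinv a.1.2)).
rewrite (uf_skew a.2) (uf_skew (phiinv a.1.2)); ring.
Qed.
Lemma D_lin r a b c : D (r *: a + b) c = r * D a c + D b c.
Proof.
rewrite /d_form /= phiinv_lin !fgbil1 !uf_linl; ring.
Qed.
Lemma D_linr r a b c : D c (r *: a + b) = r * D c a + D c b.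
Proof. by rewrite D_sym D_lin !(D_sym c). Qed.
Lemma D_0l b : D 0 b = 0.
Proof. by rewrite /d_form /= phiinv0 !fg0l !uf0l; ring. Qed.
Lemma D_0r b : D b 0 = 0.
Proof. by rewrite D_sym D_0l. Qed.
Lemma D_Nl x b : D (N x) b = fg x b.1.1.
Proof. by rewrite /d_form /= phiinv0 !fg0l !uf0l; ring. Qed.
Lemma D_Nr x b : D b (N x) = fg b.1.1 x.
Proof. by rewrite D_sym D_Nl fgsym. Qed.
Lemma D_Hl h b : D (Hd' h) b = 2 * fg h b.2 - 2 * uf h (phiinv b.1.2).
Proof. by rewrite /d_form /= phiinv0 !fg0l !uf0l; ring. Qed.
Lemma D_Kl h b : inh h -> D (Kd' (phi h)) b = 2 * uf h b.2 + 2 * fg h (phiinv b.1.2).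
Proof. by move=> hh'; rewrite /d_form /= phinv2 // !fg0l !uf0l; ring. Qed.

Let bdl1 : forall r a a' b, in_d bg hh a -> in_d bg hh a' -> in_d bg hh b ->
     bd (r *: a + a') b = r *: bd a b + bd a' b.
Proof. by move: Hbd => -[]. Qed.
Let bdl2 : forall r a b b', in_d bg hh a -> in_d bg hh b -> in_d bg hh b' ->
     bd a (r *: b + b') = r *: bd a b + bd a b'.
Proof. by move: Hbd => -[_ []]. Qed.
Let bdanti : forall a b, in_d bg hh a -> in_d bg hh b -> bd a b = - bd b a.
Proof. by move: Hbd => -[_ [_ []]]. Qed.
Let bdhk : forall h h', inh h -> inh h' ->
     [/\ bd (Hd' h) (Hd' h') = 0, bd (Hd' h) (Kd' (phi h')) = 0
       & bd (Kd' (phi h)) (Kd' (phi h')) = 0].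
Proof. by move: Hbd => -[_ [_ [_ []]]]. Qed.
Let bdHN : forall h x alpha, inh h -> rv x alpha ->
     bd (Hd' h) (N x) = N ((alpha h - ur h alpha) *: x).
Proof. by move: Hbd => -[_ [_ [_ [_ []]]]]. Qed.
Let bdKN : forall h x alpha, inh h -> rv x alpha ->
     bd (Kd' (phi h)) (N x) = N ((ur h alpha + alpha h) *: x).
Proof. by move: Hbd => -[_ [_ [_ [_ [_ []]]]]]. Qed.
Let bdNN1 : forall x alpha y beta, rv x alpha -> rv y beta ->
     (exists h, inh h /\ alpha h + beta h != 0) ->
     bd (N x) (N y) = N (bg x y).
Proof. by move: Hbd => -[_ [_ [_ [_ [_ [_ []]]]]]]. Qed.
Let bdNN2 : forall x alpha y beta, rv x alpha -> rv y beta ->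
     (forall h, inh h -> alpha h + beta h = 0) ->
     bd (N x) (N y) = (0, 2^-1 *: phi (bg x y), 2^-1 *: bg x y).
Proof. by move: Hbd => -[_ [_ [_ [_ [_ [_ []]]]]]]. Qed.

Lemma rv_eig x alpha : rv x alpha -> forall h, inh h -> bg h x = alpha h *: x.
Proof. by move=> [_ [_ E]]. Qed.

Lemma weight_orth v z (mu nu : G -> F) :
  (forall h, inh h -> bg h v = mu h *: v) -> (forall h, inh h -> bg h z = nu h *: z) ->
  (exists h, inh h /\ mu h + nu h != 0) -> fg v z = 0.
Proof.
move=> Ev Ez [h [ih nz]].
have E1 := fginv v h z; rewrite (Ez _ ih) fgZr bg_anti // (Ev _ ih) fgNl fgZl in E1.
have : (mu h + nu h) * fg v z = 0 by rewrite mulrDl -E1 addrN.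
by move/eqP; rewrite mulf_eq0 (negbTE nz) /= => /eqP.
Qed.

Lemma br_eig x y alpha beta : rv x alpha -> rv y beta ->
  forall h, inh h -> bg h (bg x y) = (alpha h + beta h) *: bg x y.
Proof.
move=> rx ry h ih; rewrite bg_der // (rv_eig rx ih) (rv_eig ry ih) bgZl // bgZr //.
by rewrite scalerDl.
Qed.

Definition opp (alpha beta : G -> F) := forall h, inh h -> alpha h + beta h = 0.

Lemma opp_split alpha beta : opp alpha beta \/ (exists h, inh h /\ alpha h + beta h != 0).
Proof.
have [H|H] := Classical_Prop.classic (exists h, inh h /\ alpha h + beta h != 0); [right; exact: H | left].
move=> h ih; apply/eqP; apply/negPn/negP => ne; apply: H; by exists h; split.
Qed.

Lemma orth x y alpha beta : rv x alpha -> rv y beta ->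
  (exists h, inh h /\ alpha h + beta h != 0) -> fg x y = 0.
Proof. by move=> rx ry; apply: weight_orth; apply: rv_eig. Qed.

Lemma ur_opp h alpha beta : opp alpha beta -> ur h beta = - ur h alpha.
Proof.
move=> op; rewrite /uroot -sumrN; apply: eq_bigr => i _; rewrite -sumrN.
apply: eq_bigr => j _.
have : beta (hh j) = - alpha (hh j).
  by apply/eqP; rewrite -addr_eq0 addrC; apply/eqP; apply: op; apply: in_h_hh.
by move=> ->; rewrite mulrN.
Qed.

Section Opp.
Variables (x y : G) (alpha beta : G -> F).
Hypotheses (rx : rv x alpha) (ry : rv y beta) (op : opp alpha beta).
Let w := bg x y.
Lemma w_in : inh w.
Proof. exact: (root_pair_in_h Hlie Hcs Hgen Hsym rx ry op). Qed.
Lemma fg_w_h h : inh h -> fg w h = alpha h * fg x y.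
Proof.
move=> ih; rewrite /w fginv bg_anti // (rv_eig ry ih) fgNr fgZr.
have -> : beta h = - alpha h by apply/eqP; rewrite -addr_eq0 addrC; apply/eqP; apply: op.
by rewrite mulNr opprK.
Qed.
Lemma uf_h_w h : uf h w = ur h alpha * fg x y.
Proof.
rewrite /uform /uroot mulr_suml; apply: eq_bigr => i _; rewrite mulr_suml.
apply: eq_bigr => j _; rewrite fg_w_h ?mulrA //; exact: in_h_hh.
Qed.
Let two_nz : (2 : F) != 0.
Proof. by rewrite pnatr_eq0. Qed.
Lemma D_H_Z h : inh h ->
  D (Hd' h) (0, 2^-1 *: phi w, 2^-1 *: w) = (alpha h - ur h alpha) * fg x y.
Proof.
move=> ih; have wi := w_in; rewrite D_Hl /= phiinvZ phinv2 // fgZr ufZr uf_h_w (fgsym h) fg_w_h //.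
by rewrite !mulrA mulfV // !mul1r mulrBl.
Qed.
Lemma D_K_Z h : inh h ->
  D (Kd' (phi h)) (0, 2^-1 *: phi w, 2^-1 *: w) = (ur h alpha + alpha h) * fg x y.
Proof.
move=> ih; have wi := w_in; rewrite D_Kl //= phiinvZ phinv2 // fgZr ufZr uf_h_w (fgsym h) fg_w_h //.
by rewrite !mulrA mulfV // !mul1r mulrDl.
Qed.
End Opp.

Lemma dT_ext (a b : dT G K) : a.1.1 = b.1.1 -> a.1.2 = b.1.2 -> a.2 = b.2 -> a = b.
Proof. by case: a => [[? ?] ?]; case: b => [[? ?] ?] /= -> -> ->. Qed.
Lemma ND (a b : G) : N (a + b) = N a + N b.
Proof. by apply: dT_ext; rewrite /= ?addr0. Qed.
Lemma oppN (a : G) : - N a = N (- a).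
Proof. by apply: dT_ext; rewrite /= ?oppr0. Qed.

Lemma in_n0 : in_n bg hh 0.
Proof. by exists [::]; rewrite big_nil. Qed.
Lemma rv_scale r x alpha : r != 0 -> rv x alpha -> rv (r *: x) alpha.
Proof.
move=> nz [xnz [ex E]]; split; first by rewrite scaler_eq0 negb_or nz.
split=> // h ih; by rewrite bgZr // E // !scalerA mulrC.
Qed.
Lemma in_n_comb r x y : in_n bg hh x -> in_n bg hh y -> in_n bg hh (r *: x + y).
Proof.
move=> [s [Hs ->]] [s' [Hs' ->]].
case: (eqVneq r 0) => [->|nz]; first by rewrite scale0r add0r; exists s'.
exists ([seq r *: z | z <- s] ++ s'); split; last by rewrite big_cat big_map scaler_sumr.
move=> z; rewrite mem_cat => /orP [/mapP [z' z's ->]|]; last exact: Hs'.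
by have [al ral] := Hs z' z's; exists al; apply: rv_scale.
Qed.
Lemma in_n_rv x alpha : rv x alpha -> in_n bg hh x.
Proof.
move=> rx; exists [:: x]; rewrite big_seq1; split => // z.
by rewrite inE => /eqP ->; exists alpha.
Qed.

Local Notation ind := (@in_d _ _ G bg hh K).
Lemma in_d0 : ind 0.
Proof. by split; [exact: in_n0 | exact: in_h0]. Qed.
Lemma in_d_comb r a b : ind a -> ind b -> ind (r *: a + b).
Proof. by move=> [a1 a2] [b1 b2]; split; [apply: in_n_comb | apply: in_h_comb]. Qed.
Lemma in_d_N x alpha : rv x alpha -> ind (N x).
Proof. by move=> rx; split; [exact: in_n_rv rx | exact: in_h0]. Qed.

Definition hk (b : dT G K) :=
  (exists h, inh h /\ b = Hd' h) \/ (exists h, inh h /\ b = Kd' (phi h)).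
Definition gen a := (exists x alpha, rv x alpha /\ a = N x) \/ hk a.

Lemma hk_in_d b : hk b -> ind b.
Proof.
by case=> -[h [ih ->]]; split => //=; rewrite ?phi0; (exact: in_n0 || exact: in_h0).
Qed.
Lemma hk_11 b : hk b -> b.1.1 = 0.
Proof. by case=> -[h [ih ->]]. Qed.
Lemma gen_in_d a : gen a -> ind a.
Proof. by case=> [[x [al [rx ->]]]|/hk_in_d]; [exact: in_d_N rx|]. Qed.

Lemma hk0 a b : hk a -> hk b -> bd a b = 0.
Proof.
move=> ka kb; case: (ka) => -[h [ih Ea]]; case: (kb) => -[h' [ih' Eb]]; subst.
- by case: (bdhk ih ih').
- by case: (bdhk ih ih').
- rewrite bdanti; [|exact: hk_in_d|exact: hk_in_d].
  by case: (bdhk ih' ih) => _ -> _; rewrite oppr0.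
- by case: (bdhk ih ih').
Qed.

Lemma hk_sig b : hk b -> exists s : (G -> F) -> F,
  [/\ forall x alpha, rv x alpha -> bd b (N x) = N (s alpha *: x),
      forall alpha beta, opp alpha beta -> s beta = - s alpha &
      forall x y alpha beta, rv x alpha -> rv y beta -> opp alpha beta ->
        D b (0, 2^-1 *: phi (bg x y), 2^-1 *: bg x y) = s alpha * fg x y].
Proof.
case=> -[h [ih ->]].
- exists (fun al => al h - ur h al); split.
  + by move=> x al rx; rewrite (bdHN ih rx).
  + move=> al be op; rewrite (ur_opp h op).
    have -> : be h = - al h by apply/eqP; rewrite -addr_eq0 addrC; apply/eqP; apply: op.
    by rewrite opprB opprK addrC.
  + by move=> x y al be rx ry op; rewrite (D_H_Z rx ry op ih).
- exists (fun al => ur h al + al h); split.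
  + by move=> x al rx; rewrite (bdKN ih rx).
  + move=> al be op; rewrite (ur_opp h op).
    have -> : be h = - al h by apply/eqP; rewrite -addr_eq0 addrC; apply/eqP; apply: op.
    by rewrite opprD.
  + by move=> x y al be rx ry op; rewrite (D_K_Z rx ry op ih).
Qed.

Lemma bdN_hk b x alpha s : hk b -> rv x alpha ->
  bd b (N x) = N (s *: x) -> bd (N x) b = N (- (s *: x)).
Proof.
move=> kb rx E; rewrite bdanti; [|exact: in_d_N rx|exact: hk_in_d].
by rewrite E oppN.
Qed.

Lemma op_eq al be h : opp al be -> inh h -> be h = - al h.
Proof. by move=> op ih; apply/eqP; rewrite -addr_eq0 addrC; apply/eqP; apply: op. Qed.

Lemma P_gen a b c : gen a -> gen b -> gen c -> D (bd a b) c = D a (bd b c).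
Proof.
case=> [[x [al [rx ->]]]|ka]; case=> [[y [be [ry ->]]]|kb];
  case=> [[z [ga [rz ->]]]|kc].
-
  case: (opp_split al be) => [op1|nop1]; case: (opp_split be ga) => [op2|nop2].
  + by rewrite (bdNN2 rx ry op1) (bdNN2 ry rz op2) D_Nl D_Nr /= fg0l fg0r.
  + rewrite (bdNN2 rx ry op1) (bdNN1 ry rz nop2) D_Nr D_Nl /= fg0l.
    symmetry; apply: (weight_orth (mu := al) (nu := fun h => be h + ga h)).
    * exact: rv_eig.
    * exact: br_eig ry rz.
    * have [_ [[h0 [ih0 nz0]] _]] := rz; exists h0; split => //.
      by rewrite addrA op1 // add0r.
  + rewrite (bdNN1 rx ry nop1) (bdNN2 ry rz op2) D_Nr D_Nl /= fg0r.
    apply: (weight_orth (mu := fun h => al h + be h) (nu := ga)).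
    * exact: br_eig rx ry.
    * exact: rv_eig.
    * have [_ [[h0 [ih0 nz0]] _]] := rx; exists h0; split => //.
      by rewrite -addrA op2 // addr0.
  + by rewrite (bdNN1 rx ry nop1) (bdNN1 ry rz nop2) D_Nr D_Nl /= fginv.
-
  have [s [sN sopp sZ]] := hk_sig kc.
  rewrite (bdN_hk kc ry (sN _ _ ry)) D_Nl /= fgNr fgZr.
  case: (opp_split al be) => [op|nop].
  + by rewrite (bdNN2 rx ry op) D_sym (sZ _ _ _ _ rx ry op) (sopp _ _ op) mulNr opprK.
  + by rewrite (bdNN1 rx ry nop) D_Nl (hk_11 kc) fg0r (orth rx ry nop) !mulr0 oppr0.
-
  have [s [sN sopp _]] := hk_sig kb.
  rewrite (bdN_hk kb rx (sN _ _ rx)) (sN _ _ rz) D_Nl D_Nr /= fgNl fgZl fgZr.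
  case: (opp_split al ga) => [op|nop].
  + by rewrite (sopp _ _ op) mulNr.
  + by rewrite (orth rx rz nop) !mulr0 oppr0.
-
  have [s [sN _ _]] := hk_sig kb.
  by rewrite (bdN_hk kb rx (sN _ _ rx)) (hk0 kb kc) D_Nl D_0r (hk_11 kc) fg0r.
-
  have [s [sN sopp sZ]] := hk_sig ka.
  rewrite (sN _ _ ry) D_Nl /= fgZl.
  case: (opp_split be ga) => [op|nop].
  + by rewrite (bdNN2 ry rz op) (sZ _ _ _ _ ry rz op).
  + by rewrite (bdNN1 ry rz nop) D_Nr (hk_11 ka) fg0l (orth ry rz nop) !mulr0.
-
  have [s [sN _ _]] := hk_sig ka; have [s' [sN' _ _]] := hk_sig kc.
  by rewrite (sN _ _ ry) (bdN_hk kc ry (sN' _ _ ry)) D_Nl D_Nr (hk_11 kc) (hk_11 ka) fg0r fg0l.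
-
  have [s [sN _ _]] := hk_sig kb.
  by rewrite (hk0 ka kb) (sN _ _ rz) D_0l D_Nr (hk_11 ka) fg0l.
- by rewrite (hk0 ka kb) (hk0 kb kc) D_0l D_0r.
Qed.

Lemma span_in_d a : spanP gen a -> ind a.
Proof.
elim=> [|r y x gy _ IH]; first exact: in_d0.
by apply: in_d_comb => //; apply: gen_in_d.
Qed.

Lemma bd0l b : ind b -> bd 0 b = 0.
Proof.
move=> ib; apply: selfadd0; have := bdl1 1 in_d0 in_d0 ib.
by rewrite scale1r addr0 scale1r; apply.
Qed.
Lemma bd0r b : ind b -> bd b 0 = 0.
Proof.
move=> ib; apply: selfadd0; have := bdl2 1 ib in_d0 in_d0.
by rewrite scale1r addr0 scale1r; apply.
Qed.

Lemma P_a b c : gen b -> gen c -> forall a, spanP gen a ->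
  D (bd a b) c = D a (bd b c).
Proof.
move=> gb gc a; elim=> [|r y x gy sx IH].
  rewrite bd0l; first by rewrite !D_0l.
  exact: gen_in_d.
rewrite bdl1; [|exact: gen_in_d|exact: span_in_d|exact: gen_in_d].
by rewrite !D_lin IH P_gen.
Qed.

Lemma P_b c : gen c -> forall a, spanP gen a -> forall b, spanP gen b ->
  D (bd a b) c = D a (bd b c).
Proof.
move=> gc a sa b; elim=> [|r y x gy sx IH].
  rewrite bd0r; last exact: span_in_d.
  rewrite bd0l; last exact: gen_in_d.
  by rewrite D_0l D_0r.
rewrite bdl2; [|exact: span_in_d|exact: gen_in_d|exact: span_in_d].
rewrite bdl1; [|exact: gen_in_d|exact: span_in_d|exact: gen_in_d].
by rewrite D_lin D_linr IH (P_a gy gc sa).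
Qed.

Lemma P_c a b c : spanP gen a -> spanP gen b -> spanP gen c ->
  D (bd a b) c = D a (bd b c).
Proof.
move=> sa sb; elim=> [|r y x gy sx IH].
  rewrite bd0r; last exact: span_in_d.
  by rewrite !D_0r.
rewrite bdl2; [|exact: span_in_d|exact: gen_in_d|exact: span_in_d].
by rewrite !D_linr IH (P_b gy sa sb).
Qed.

Lemma N_span x : in_n bg hh x -> spanP gen (N x).
Proof.
move=> [s [Hs ->]]; elim: s Hs => [|y s IH] Hs.
  by rewrite big_nil; apply: sp0.
rewrite big_cons ND -[N y]scale1r; apply: spS; last first.
  by apply: IH => z zs; apply: Hs; rewrite inE zs orbT.
have [al ry] := Hs y (mem_head y s); by left; exists y, al.
Qed.

Lemma in_d_span a : ind a -> spanP gen a.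
Proof.
case: a => [[x k] h] [/= nx ih].
have [ik Ek] := phinv1 k.
have -> : ((x, k, h) : dT G K) = N x + (1 *: Kd' (phi (phiinv k)) + (1 *: Hd' h + 0)).
  by apply: dT_ext; rewrite /= ?Ek ?scale1r ?addr0 ?add0r.
apply: spanP_add; first exact: N_span.
apply: spS; first by right; right; exists (phiinv k).
apply: spS; last exact: sp0.
by right; left; exists h.
Qed.
End Main.

Theorem mainTheorem2
  (n : nat) (C : 'M[int]_n) (d : 'I_n -> nat)
  (F : numClosedFieldType) (G : lmodType F) (bg : G -> G -> G)
  (hh e f : 'I_n -> G) (fg : G -> G -> F) (u : 'M[F]_n)
  (K : lmodType F) (phi : G -> K) (phiinv : K -> G)
  (bd : dT G K -> dT G K -> dT G K) :
  (0 < n)%N -> gcm C -> indecomposable C -> sym_posdef_symmetrizer C d ->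
  lie_bracket bg -> chevalley_serre C bg hh e f -> lie_generated bg hh e f ->
  lin_indep hh ->
  g_invariant_form C bg hh e f d fg ->
  skew_symmetric u ->
  phi_iso hh phi phiinv ->
  d_bracket bg hh fg u phi bd ->
  (forall r a b c, in_d bg hh a -> in_d bg hh b -> in_d bg hh c ->
     d_form hh fg u phiinv (r *: a + b) c
     = r * d_form hh fg u phiinv a c + d_form hh fg u phiinv b c) /\
  (forall a b, in_d bg hh a -> in_d bg hh b ->
     d_form hh fg u phiinv a b = d_form hh fg u phiinv b a) /\
  (forall a b c, in_d bg hh a -> in_d bg hh b -> in_d bg hh c ->
     d_form hh fg u phiinv (bd a b) c = d_form hh fg u phiinv a (bd b c)).
Proof.
move=> _ _ _ Hsym Hlie Hcs Hgen _ Hinv Hskew Hphi Hbd; split; [|split].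
- by move=> r a b c _ _ _; apply: (D_lin u Hinv Hphi).
- by move=> a b _ _; apply: (D_sym phiinv Hinv Hskew).
- move=> a b c ia ib ic.
  by apply: (P_c Hlie Hcs Hgen Hsym Hinv Hskew Hphi Hbd); apply: (in_d_span (bg := bg) Hphi).
Qed.
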